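(* For a word $w=w_1\cdots w_n$ over $\{1,2,3\}$ let $s(w)=|\{i : 1\le i\le n-2,\ w_{i+2}-w_i=2\}|$ (the number of occurrences of the place-difference-value pattern $(12,(\mathbb{P},\{2\},\mathbb{P}),\{(1,2,\{2\})\},(\mathbb{P},\mathbb{P}))$). Then $$\sum_{w\in\{1,2,3\}^*} q^{|w|}z^{s(w)}=\frac{1}{\bigl(1-q^2(1-z)\bigr)\bigl(1-3q-q^2(z-1)\bigr)},$$ where the sum is over all finite words (including the empty word) and $|w|$ is the length of $w$. *)

(* Defs.v *)
From mathcomp Require Import all_boot all_order all_algebra.
Set Implicit Arguments. Unset Strict Implicit. Unset Printing Implicit Defensive.
Import Order.TTheory GRing.Theory Num.Theory.
Local Open Scope ring_scope.

(* A word over {1,2,3} is a sequence of elements of 'I_3; the element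
   i : 'I_3 stands for the letter i+1. *)
Definition letter (w : seq 'I_3) (i : nat) : nat := (nth ord0 w i).+1.

Definition s_stat (w : seq 'I_3) : nat :=
  count (fun i => ((letter w (i + 2))%:Z - (letter w i)%:Z == 2%:Z)%R)
        (iota 0 (size w - 2)).

(* Coefficient of q^n in the generating function: sum over words of length n
   of z^{s(w)}, as a polynomial in z with integer coefficients. *)
Definition gf_coeff (n : nat) : {poly int} :=
  \sum_(w : n.-tuple 'I_3) 'X^(s_stat w).

(* The denominator (1 - q^2 (1 - z)) (1 - 3q - q^2 (z - 1)),
   as a polynomial in q = 'X with coefficients in Z[z], z = 'X%:P. *)
Definition denom : {poly {poly int}} :=
  (1 - 'X^2 * (1 - ('X : {poly int})%:P)) *
  (1 - 3%:R * 'X - 'X^2 * (('X : {poly int}) - 1)%:P).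

(* Main.v *)
Require Import Defs.
From mathcomp Require Import all_boot all_order all_algebra.
From mathcomp Require Import zify ring.
Import GRing.Theory.
Local Open Scope ring_scope.

Lemma sum_tuple_cons n (F : seq 'I_3 -> {poly int}) :
  \sum_(w : n.+1.-tuple 'I_3) F w = \sum_(x : 'I_3) \sum_(w : n.-tuple 'I_3) F (x :: w).
Proof.
rewrite pair_bigA /=.
rewrite (reindex (fun p : 'I_3 * n.-tuple 'I_3 => [tuple of p.1 :: p.2])) //=.
exists (fun t : n.+1.-tuple 'I_3 => (thead t, behead_tuple t)).
  by move=> [x t] _ /=; congr pair; apply: val_inj.
by move=> t _; rewrite [RHS]tuple_eta.
Qed.

Lemma sum_tuple0 (F : seq 'I_3 -> {poly int}) :
  \sum_(w : 0.-tuple 'I_3) F w = F [::].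
Proof.
rewrite (eq_bigr (fun _ => F [::])); last by move=> w _; rewrite tuple0.
by rewrite sumr_const card_tuple expn0.
Qed.

Definition pw (w : seq 'I_3) (i : nat) : bool :=
  ((letter w (i + 2))%:Z - (letter w i)%:Z == 2%:Z)%R.

Lemma pwE w i : pw w i = (nth ord0 w (i+2) == (nth ord0 w i) + 2 :> nat)%N.
Proof. by rewrite /pw /letter subr_eq -PoszD eqz_nat addnS eqSS !addn2. Qed.

Lemma s_statE w N : (size w <= N + 2)%N -> s_stat w = count (pw w) (iota 0 N).
Proof.
move=> hN; rewrite /s_stat.
have -> : N = ((size w - 2) + (N - (size w - 2)))%N by lia.
rewrite iotaD count_cat.
have -> : count (pw w) (iota (0 + (size w - 2)) (N - (size w - 2))) = 0%N.
  apply/eqP; rewrite eqn0Ngt -has_count; apply/hasPn => i.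
  rewrite mem_iota => /andP [hi _]; rewrite pwE nth_default /=; first by rewrite addn2.
  lia.
by rewrite addn0.
Qed.

Lemma s_cons x w : s_stat (x :: w) =
  (s_stat w + ((x == 0%N :> nat) && (nth ord0 w 1 == 2%N :> nat)))%N.
Proof.
rewrite (@s_statE (x :: w) (size w).+1) /=; last by lia.
rewrite (@s_statE w (size w)); last by lia.
rewrite -[1%N]/(1 + 0)%N iotaDl count_map.
rewrite pwE /= addnC; congr addn.
by case: x => [[|[|[|]]] ?] //=; case: (nth ord0 w 1) => [[|[|[|]]] ?].
Qed.

Definition ind (b : bool) : {poly int} := b%:R.
Definition T n := gf_coeff n.
Definition P n := \sum_(w : n.-tuple 'I_3) ind (nth ord0 w 1 == 2%N :> nat) * 'X^(s_stat w).
Definition Q n := \sum_(w : n.-tuple 'I_3) ind (nth ord0 w 0 == 2%N :> nat) * 'X^(s_stat w).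
Definition R n := \sum_(w : n.-tuple 'I_3) ind (nth ord0 w 0 == 2%N :> nat) *
   (ind (nth ord0 w 1 == 2%N :> nat) * 'X^(s_stat w)).

Lemma Xcons x w : 'X^(s_stat (x::w)) = 'X^(s_stat w) +
  ind (x == 0%N :> nat) * ('X - 1) * (ind (nth ord0 w 1 == 2%N :> nat) * 'X^(s_stat w)) :> {poly int}.
Proof.
rewrite s_cons /ind; case: (x == 0%N :> nat); case: (nth ord0 w 1 == 2%N :> nat) => /=;
  rewrite ?exprD ?expr1 ?expr0; ring.
Qed.

Lemma sum_ind0 (K : {poly int}) : \sum_(x : 'I_3) ind (x == 0%N :> nat) * K = K.
Proof. by rewrite !big_ord_recl big_ord0 /ind /= mul1r !mul0r !addr0. Qed.
Lemma sum_ind2 (K : {poly int}) : \sum_(x : 'I_3) ind (x == 2%N :> nat) * K = K.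
Proof. by rewrite !big_ord_recl big_ord0 /ind /= mul1r !mul0r !add0r addr0. Qed.
Lemma sum_ind20 (K : {poly int}) :
  \sum_(x : 'I_3) ind (x == 2%N :> nat) * (ind (x == 0%N :> nat) * K) = 0.
Proof. by rewrite !big_ord_recl big_ord0 /ind /= !mul0r !mulr0 !add0r. Qed.

Lemma T_rec n : T n.+1 = 3%:R * T n + ('X - 1) * P n.
Proof.
rewrite /T /gf_coeff (sum_tuple_cons n (fun w => GRing.exp (polyX _) (s_stat w))).
under eq_bigr => x _ do under eq_bigr => w _ do rewrite Xcons.
under eq_bigr => x _ do rewrite big_split /=.
rewrite big_split /= sumr_const card_ord mulr_natl.
congr (_ + _).
under eq_bigr => x _ do rewrite -mulr_sumr -mulrA.
by rewrite sum_ind0.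
Qed.

Lemma P_rec n : P n.+1 = 3%:R * Q n + ('X - 1) * R n.
Proof.
rewrite /P (sum_tuple_cons n (fun w => ind (nth ord0 w 1 == 2%N :> nat) * GRing.exp (polyX _) (s_stat w))) /=.
under eq_bigr => x _ do under eq_bigr => w _ do rewrite Xcons mulrDr.
under eq_bigr => x _ do rewrite big_split /=.
rewrite big_split /= sumr_const card_ord mulr_natl.
congr (_ + _).
under eq_bigr => x _ do under eq_bigr => w _ do rewrite mulrCA -mulrA.
under eq_bigr => x _ do rewrite -mulr_sumr -mulr_sumr.
by rewrite sum_ind0.
Qed.

Lemma Q_rec n : Q n.+1 = T n.
Proof.
rewrite /Q (sum_tuple_cons n (fun w => ind (nth ord0 w 0 == 2%N :> nat) * GRing.exp (polyX _) (s_stat w))) /=.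
under eq_bigr => x _ do under eq_bigr => w _ do rewrite Xcons mulrDr -[in X in _ + X]mulrA.
under eq_bigr => x _ do rewrite big_split /= -mulr_sumr -mulr_sumr -mulr_sumr.
by rewrite big_split /= sum_ind2 sum_ind20 addr0.
Qed.

Lemma rearr (a b e c k B : {poly int}) :
  a * (b * (e + c * k * B)) = a * (b * e) + a * (c * (k * (b * B))).
Proof. ring. Qed.

Lemma R_rec n : R n.+1 = Q n.
Proof.
rewrite /R (sum_tuple_cons n (fun w => ind (nth ord0 w 0 == 2%N :> nat) * (ind (nth ord0 w 1 == 2%N :> nat) * GRing.exp (polyX _) (s_stat w)))) /=.
under eq_bigr => x _ do under eq_bigr => w _ do rewrite Xcons rearr.
under eq_bigr => x _ do rewrite big_split /= -!mulr_sumr.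
by rewrite big_split /= sum_ind2 sum_ind20 addr0.
Qed.

Lemma T0 : T 0 = 1.
Proof. by rewrite /T /gf_coeff (sum_tuple0 (fun w => GRing.exp (polyX _) (s_stat w))) expr0. Qed.
Lemma P0 : P 0 = 0.
Proof. by rewrite /P (sum_tuple0 (fun w => ind (nth ord0 w 1 == 2%N :> nat) * GRing.exp (polyX _) (s_stat w))) /ind mul0r. Qed.
Lemma Q0 : Q 0 = 0.
Proof. by rewrite /Q (sum_tuple0 (fun w => ind (nth ord0 w 0 == 2%N :> nat) * GRing.exp (polyX _) (s_stat w))) /ind mul0r. Qed.
Lemma R0 : R 0 = 0.
Proof. by rewrite /R (sum_tuple0 (fun w => ind (nth ord0 w 0 == 2%N :> nat) * (ind (nth ord0 w 1 == 2%N :> nat) * GRing.exp (polyX _) (s_stat w)))) /ind mul0r. Qed.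

Lemma denomE : denom = 1 - 3%:R *: 'X + (3%:R * (1 - 'X)) *: 'X^3 - ((1 - 'X)^+2) *: 'X^4.
Proof. rewrite /denom -!mul_polyC. ring. Qed.

Lemma dcoef k : denom`_k = if k == 0%N then 1 else if k == 1%N then - 3%:R
   else if k == 3%N then 3%:R * (1 - 'X) else if k == 4%N then - (1 - 'X)^+2 else 0.
Proof.
rewrite denomE !coefB !coefD ?coefN !coefZ coef1 ?coefX !coefXn.
case: k => [|[|[|[|[|k]]]]] /=; rewrite ?mulr0 ?mulr1 ?subr0 ?add0r ?addr0 ?sub0r //.
Qed.

Theorem mainTheorem3 (n : nat) :
  \sum_(k < n.+1) denom`_k * gf_coeff (n - k) = (n == 0%N)%:R.
Proof.
have T1 : T 1 = 3%:R by rewrite T_rec T0 P0; ring.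
have P1 : P 1 = 0 by rewrite P_rec Q0 R0; ring.
have T2 : T 2 = 9%:R by rewrite T_rec T1 P1; ring.
have P2 : P 2 = 3%:R by rewrite P_rec Q_rec R_rec T0 Q0; ring.
have T3 : T 3 = 27%:R + 3%:R * ('X - 1) by rewrite T_rec T2 P2; ring.
under eq_bigr => k _ do rewrite -/(T _).
case: n => [|[|[|[|m]]]].
- by rewrite big_ord_recl big_ord0 dcoef /= ?subSS ?subn0 T0 mul1r addr0.
- rewrite !big_ord_recl big_ord0 !dcoef /= ?subSS ?subn0 T0 T1; ring.
- rewrite !big_ord_recl big_ord0 !dcoef /= ?subSS ?subn0 T0 T1 T2; ring.
- rewrite !big_ord_recl big_ord0 !dcoef /= ?subSS ?subn0 T0 T1 T2 T3; ring.
rewrite 5!big_ord_recl big1; last by move=> i _; rewrite dcoef /= mul0r.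
rewrite !dcoef /= ?subSS ?subn0.
rewrite (T_rec m.+3) (P_rec m.+2) (Q_rec m.+1) (R_rec m.+1) (Q_rec m).
move: (T m.+3) (T m.+2) (T m.+1) (T m) => a b c d; ring.
Qed.
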